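(* Let $p,q$ be positive integers with $2\le p/q<4$, and let $f,g$ be two $(p,q)$-colourings of a graph $G$ where $g$ is obtained from $f$ by recolouring a vertex set $X$ by $\alpha$, i.e. $\alpha\in\{1,\dots,p-1\}$, $g(v)\equiv f(v)+\alpha\pmod p$ for $v\in X$ and $g(v)=f(v)$ for $v\notin X$. Then either there is a sequence of $(p,q)$-colourings $f=f_0,f_1,\dots,f_\alpha=g$ in which each $f_{i+1}$ is obtained from $f_i$ by recolouring $X$ by $1$ (adding $1$ modulo $p$ to the colour of every vertex of $X$), or there is a sequence of $(p,q)$-colourings $f=f_0,f_1,\dots,f_{p-\alpha}=g$ in which each $f_{i+1}$ is obtained from $f_i$ by recolouring $X$ by $-1$ (subtracting $1$ modulo $p$ from the colour of every vertex of $X$).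
   Context: A $(p,q)$-colouring of $G$ is a map $f:V(G)\to\{0,\dots,p-1\}$ with $q\le|f(u)-f(v)|\le p-q$ for every edge $uv$. *)

(* Defs.v *)
From mathcomp Require Import all_boot.
Set Implicit Arguments. Unset Strict Implicit. Unset Printing Implicit Defensive.

Definition absdiff (m n : nat) : nat := (m - n) + (n - m).

Definition pq_colouring (T : finType) (e : rel T) (p q : nat) (f : T -> nat) : Prop :=
  (forall v, f v < p) /\
  (forall u v, e u v -> q <= absdiff (f u) (f v) <= p - q).

Definition recolour (T : finType) (p : nat) (X : {set T}) (a : nat) (f : T -> nat)
  : T -> nat :=
  fun v => if v \in X then (f v + a) %% p else f v.

(* Main.v *)
Require Import Defs.
From mathcomp Require Import all_boot zify.

Definition sh p a i := if a + i < p then a + i else a + i - p.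
Definition shb p a i := if i <= a then a - i else a + p - i.

Lemma modsmall2 p x : x < 2 * p -> x %% p = if x < p then x else x - p.
Proof.
move=> h; case: ifP => hx; first by rewrite modn_small.
have ->: x = (x - p) + p by lia.
by rewrite modnDr modn_small; lia.
Qed.

Lemma fwd_edge p q a b alpha i : a < p -> b < p -> alpha + 2 * q <= p -> p < 4 * q -> i <= alpha ->
  q <= absdiff a b <= p - q -> q <= absdiff (sh p a alpha) b <= p - q ->
  q <= absdiff (sh p a i) b <= p - q.
Proof.
rewrite /absdiff /sh => ha hb h1 h2 hi /andP[h3 h4] /andP[] .
case: ifP => H1; case: ifP => H2 h5 h6; apply/andP; split; lia.
Qed.

Lemma bwd_edge p q a b alpha i : a < p -> b < p -> p < alpha + 2 * q -> p < 4 * q -> alpha < p -> i <= p - alpha ->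
  q <= absdiff a b <= p - q -> q <= absdiff (sh p a alpha) b <= p - q ->
  q <= absdiff (shb p a i) b <= p - q.
Proof.
rewrite /absdiff /sh /shb => ha hb h1 h2 h0 hi /andP[h3 h4] /andP[] .
case: ifP => H1; case: ifP => H2 h5 h6; apply/andP; split; lia.
Qed.

Lemma both_edge p q a b i : a < p -> b < p -> i < p ->
  q <= absdiff a b <= p - q -> q <= absdiff (sh p a i) (sh p b i) <= p - q.
Proof.
rewrite /absdiff /sh => ha hb hi /andP[h3 h4].
case: ifP => H1; case: ifP => H2; apply/andP; split; lia.
Qed.

Lemma bboth_edge p q a b i : a < p -> b < p -> i < p ->
  q <= absdiff a b <= p - q -> q <= absdiff (shb p a i) (shb p b i) <= p - q.
Proof.
rewrite /absdiff /shb => ha hb hi /andP[h3 h4].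
case: ifP => H1; case: ifP => H2; apply/andP; split; lia.
Qed.

Theorem proposition2p6 (T : finType) (e : rel T)
  (e_sym : symmetric e) (e_irr : irreflexive e)
  (p q : nat) (hq : 0 < q) (hp : 0 < p)
  (hratio_lo : 2 * q <= p) (hratio_hi : p < 4 * q)
  (f g : T -> nat) (X : {set T}) (alpha : nat)
  (halpha1 : 1 <= alpha) (halpha2 : alpha <= p - 1)
  (hf : pq_colouring e p q f) (hg : pq_colouring e p q g)
  (hgf : forall v, g v = recolour p X alpha f v) :
  (exists s : nat -> T -> nat,
      (forall v, s 0 v = f v) /\ (forall v, s alpha v = g v) /\
      (forall i, i <= alpha -> pq_colouring e p q (s i)) /\
      (forall i, i < alpha -> forall v, s i.+1 v = recolour p X 1 (s i) v))
  \/
  (exists s : nat -> T -> nat,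
      (forall v, s 0 v = f v) /\ (forall v, s (p - alpha) v = g v) /\
      (forall i, i <= p - alpha -> pq_colouring e p q (s i)) /\
      (forall i, i < p - alpha -> forall v, s i.+1 v = recolour p X (p - 1) (s i) v)).
Proof.
case: hf => fr fe; case: hg => gr ge.
have hgX : forall v, g v = if v \in X then sh p (f v) alpha else f v.
  move=> v; rewrite hgf /recolour /sh; case: (v \in X) => //.
  by rewrite modsmall2; have := fr v; lia.
have gE : forall u v, e u v -> q <= absdiff (g u) (g v) <= p - q by [].
have symA : forall a b, absdiff a b = absdiff b a by move=> a b; rewrite /absdiff; lia.
case: (leqP (alpha + 2 * q) p) => Hc; [left|right].
- exists (fun i v => if v \in X then sh p (f v) i else f v).
  split; [move=> v; rewrite /sh; case: (v \in X) => //; have := fr v; case: ifP => //; lia|].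
  split; [by move=> v; rewrite hgX|].
  split.
  + move=> i hi; split.
      by move=> v; rewrite /sh; have := fr v; case: (v \in X) => //; case: ifP; lia.
    move=> u v huv; have Hf := fe u v huv; have Hg := ge u v huv.
    rewrite !hgX in Hg.
    case Hu: (u \in X); case Hv: (v \in X); rewrite /= Hu Hv in Hg *.
    * have hip : i < p by lia.
      exact: (both_edge _ _ _ _ _ (fr u) (fr v) hip Hf).
    * exact: (fwd_edge _ _ _ _ _ _ (fr u) (fr v) Hc hratio_hi hi Hf Hg).
    * rewrite symA; rewrite symA in Hf; rewrite symA in Hg.
      exact: (fwd_edge _ _ _ _ _ _ (fr v) (fr u) Hc hratio_hi hi Hf Hg).
    * by [].
  + move=> i hi v; rewrite /recolour /sh; case: (v \in X) => //.
    have H2 := fr v.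
    case: (boolP (f v + i < p)) => H3; case: (boolP (f v + i.+1 < p)) => H4 /=;
    rewrite modsmall2; try lia; case: ifP; lia.
- exists (fun i v => if v \in X then shb p (f v) i else f v).
  split; [move=> v; rewrite /shb leq0n subn0; by case: (v \in X)|].
  split; [move=> v; rewrite hgX /shb /sh; case: (v \in X) => //; have := fr v; case: ifP; case: ifP; lia|].
  split.
  + move=> i hi; split.
      by move=> v; rewrite /shb; have := fr v; case: (v \in X) => //; case: ifP; lia.
    move=> u v huv; have Hf := fe u v huv; have Hg := ge u v huv.
    rewrite !hgX in Hg.
    have ha : alpha < p by lia.
    case Hu: (u \in X); case Hv: (v \in X); rewrite /= Hu Hv in Hg *.
    * have hip : i < p by lia.
      exact: (bboth_edge _ _ _ _ _ (fr u) (fr v) hip Hf).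
    * exact: (bwd_edge _ _ _ _ _ _ (fr u) (fr v) Hc hratio_hi ha hi Hf Hg).
    * rewrite symA; rewrite symA in Hf; rewrite symA in Hg.
      exact: (bwd_edge _ _ _ _ _ _ (fr v) (fr u) Hc hratio_hi ha hi Hf Hg).
    * by [].
  + move=> i hi v; rewrite /recolour /shb; case: (v \in X) => //.
    have H2 := fr v.
    case: (boolP (i <= f v)) => H3; case: (boolP (i.+1 <= f v)) => H4 /=;
    rewrite modsmall2; try lia; case: ifP; lia.
Qed.
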